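(* Let $\mathfrak{R}$ be a locally finite $\mathbb{K}$-ringoid, $\mathcal{B}=\{\mathcal{B}_i\}_{i<\alpha}$ an exhaustive admissible family of subcategories of $\mathfrak{R}$, $\Delta$ its standard modules, and $0\neq M\in\mathcal{F}_f(\Delta)$ with a filtration $0=M_0\subsetneq M_1\subsetneq\cdots\subsetneq M_a=M$ such that $M_k/M_{k-1}\in\Delta(i_k)^\oplus$ and $i_1<i_2<\cdots<i_a$. Let $k\in[1,a]$, $j\le i_k$ and $f:\overline{P}(j)\to M$ a morphism. Then $\mathrm{Im}(f)\subseteq M_k$ if $j=i_k$, and $\mathrm{Im}(f)\subseteq M_{k-1}$ if $j<i_k$.
   Context: $\mathbb{K}$ commutative ring; $\mathbb{K}$-ringoid: skeletally small category with $\mathbb{K}$-module Hom-sets and bilinear composition. Right $\mathfrak{R}$-modules: additive contravariant functors $\mathfrak{R}\to\mathrm{Ab}$; $Y(e):=\mathrm{Hom}_\mathfrak{R}(-,e)$. Local object: local endomorphism ring; $\mathrm{ind}(\mathcal{B})$: isoclasses of local objects of $\mathcal{B}$; $\mathrm{add}$: direct summands of finite direct sums. Locally finite: Hom-sets of finite $\mathbb{K}$-length and Krull–Schmidt. Trace $\mathrm{Tr}_\mathcal{X}(M)$: sum of images of all morphisms $X\to M$, $X\in\mathcal{X}$. Exhaustive admissible family: $\{\mathcal{B}_i\}_{i<\alpha}$ full subcategories with $\mathrm{add}(\mathcal{B}_i)=\mathcal{B}_i$, increasing, union $\mathfrak{R}$, nonempty sections $\sigma_i(\mathcal{B}):=\mathrm{ind}(\mathcal{B}_i)\setminus\bigcup_{j<i}\mathrm{ind}(\mathcal{B}_j)$.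 $\overline{P}(j):=\bigoplus_{r\in\sigma_j(\mathcal{B})}Y(r)$; $\Delta_e(i):=Y(e)/\mathrm{Tr}_{\bigoplus_{j<i}\overline{P}(j)}(Y(e))$ for $e\in\sigma_i(\mathcal{B})$; $\Delta(i):=\{\Delta_e(i)\}_{e\in\sigma_i(\mathcal{B})}$, $\Delta:=\bigcup_i\Delta(i)$. $\mathcal{X}^\oplus$: finite direct sums of members of $\mathcal{X}$; $\mathcal{F}_f(\mathcal{X})$: modules with a finite chain of submodules whose successive quotients lie in $\mathcal{X}^\oplus$. *)

(* Defs.v *)
From mathcomp Require Import all_boot all_algebra.
From Stdlib Require Import List.

Set Implicit Arguments.
Unset Strict Implicit.
Unset Printing Implicit Defensive.
Import GRing.Theory.
Local Open Scope ring_scope.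

Record ringoid (K : comPzRingType) := Ringoid {
  Obj : Type;
  Hom : Obj -> Obj -> lmodType K;
  comp : forall x y z : Obj, Hom y z -> Hom x y -> Hom x z;
  idm : forall x : Obj, Hom x x;
  comp_assoc : forall x y z w (h : Hom z w) (g : Hom y z) (f : Hom x y),
      comp h (comp g f) = comp (comp h g) f;
  comp_idl : forall x y (f : Hom x y), comp (idm y) f = f;
  comp_idr : forall x y (f : Hom x y), comp f (idm x) = f;
  comp_linl : forall x y z (f : Hom x y) (a : K) (g g' : Hom y z),
      comp (a *: g + g') f = a *: comp g f + comp g' f;
  comp_linr : forall x y z (g : Hom y z) (a : K) (f f' : Hom x y),
      comp g (a *: f + f') = a *: comp g f + comp g f'
}.

Arguments comp {K R x y z} : rename.
Arguments idm {K R} x : rename.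

Section Ringoid.
Variables (K : comPzRingType) (R : ringoid K).
Local Notation Obj := (Obj R).
Local Notation Hom := (@Hom K R).

Definition iso_obj (x y : Obj) : Prop :=
  exists (f : Hom x y) (g : Hom y x), comp g f = idm x /\ comp f g = idm y.

Definition is_unit_end (x : Obj) (f : Hom x x) : Prop :=
  exists g : Hom x x, comp g f = idm x /\ comp f g = idm x.

Definition local_obj (x : Obj) : Prop :=
  idm x <> 0 /\
  forall f g : Hom x x, ~ is_unit_end f -> ~ is_unit_end g -> ~ is_unit_end (f + g).

Definition is_dsum_obj (x : Obj) (n : nat) (ys : 'I_n -> Obj) : Prop :=
  exists (iota : forall t, Hom (ys t) x) (pi : forall t, Hom x (ys t)),
    (forall t, comp (pi t) (iota t) = idm (ys t)) /\
    (forall s t (st : s <> t), comp (pi s) (iota t) = 0) /\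
    \sum_(t < n) comp (iota t) (pi t) = idm x.

Definition dsummand (z x : Obj) : Prop :=
  exists w : Obj, exists (i1 : Hom z x) (i2 : Hom w x) (p1 : Hom x z) (p2 : Hom x w),
    comp p1 i1 = idm z /\ comp p2 i2 = idm w /\
    comp p1 i2 = 0 /\ comp p2 i1 = 0 /\
    comp i1 p1 + comp i2 p2 = idm x.

Definition addB (B : Obj -> Prop) (z : Obj) : Prop :=
  exists (n : nat) (ys : 'I_n -> Obj) (x : Obj),
    (forall t, B (ys t)) /\ is_dsum_obj x ys /\ dsummand z x.

(* finite K-length of a K-module : existence of a composition series *)
Definition is_Ksub (V : lmodType K) (S : V -> Prop) : Prop :=
  S 0 /\ (forall u v, S u -> S v -> S (u + v)) /\ (forall (a : K) v, S v -> S (a *: v)).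

Definition finite_length (V : lmodType K) : Prop :=
  exists (n : nat) (c : nat -> V -> Prop),
    (forall t, is_Ksub (c t)) /\
    (forall v, c 0%N v <-> v = 0) /\ (forall v, c n v) /\
    forall t, (t < n)%N ->
      ((forall v, c t v -> c t.+1 v) /\ ~ (forall v, c t.+1 v -> c t v)) /\
      forall S, is_Ksub S -> (forall v, c t v -> S v) -> (forall v, S v -> c t.+1 v) ->
        (forall v, S v -> c t v) \/ (forall v, c t.+1 v -> S v).

Definition krull_schmidt : Prop :=
  forall x : Obj, exists (n : nat) (ys : 'I_n -> Obj),
    (forall t, local_obj (ys t)) /\ is_dsum_obj x ys.

Definition locally_finite : Prop :=
  (forall x y : Obj, finite_length (Hom x y)) /\ krull_schmidt.

(* Right R-modules (additive contravariant functors R -> Ab), encoded  *)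
(* setoid-style: at each object a carrier type, a membership predicate *)
(* [el] singling out the elements, an equality [meq], group operations *)
(* and the action  act m f = M(f)(m)  for f : x -> y, m in M(y).       *)
Record rmod := RMod {
  car : Obj -> Type;
  el : forall x, car x -> Prop;
  meq : forall x, car x -> car x -> Prop;
  mzero : forall x, car x;
  madd : forall x, car x -> car x -> car x;
  mopp : forall x, car x -> car x;
  act : forall x y, car y -> Hom x y -> car x
}.

Arguments el {M x} : rename.
Arguments meq {M x} : rename.
Arguments mzero M x : rename.
Arguments madd {M x} : rename.
Arguments mopp {M x} : rename.
Arguments act {M x y} : rename.

Definition is_rmod (M : rmod) : Prop :=
  (forall x, el (mzero M x)) /\
  (forall x (a b : car M x), el a -> el b -> el (madd a b)) /\
  (forall x (a : car M x), el a -> el (mopp a)) /\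
  (forall x y (m : car M y) (f : Hom x y), el m -> el (act m f)) /\
  (forall x (a : car M x), el a -> meq a a) /\
  (forall x (a b : car M x), el a -> el b -> meq a b -> meq b a) /\
  (forall x (a b c : car M x), el a -> el b -> el c -> meq a b -> meq b c -> meq a c) /\
  (forall x (a a' b b' : car M x), el a -> el a' -> el b -> el b' ->
      meq a a' -> meq b b' -> meq (madd a b) (madd a' b')) /\
  (forall x (a a' : car M x), el a -> el a' -> meq a a' -> meq (mopp a) (mopp a')) /\
  (forall x y (m m' : car M y) (f : Hom x y), el m -> el m' -> meq m m' ->
      meq (act m f) (act m' f)) /\
  (forall x (a b c : car M x), el a -> el b -> el c ->
      meq (madd a (madd b c)) (madd (madd a b) c)) /\
  (forall x (a b : car M x), el a -> el b -> meq (madd a b) (madd b a)) /\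
  (forall x (a : car M x), el a -> meq (madd (mzero M x) a) a) /\
  (forall x (a : car M x), el a -> meq (madd (mopp a) a) (mzero M x)) /\
  (forall x y (m m' : car M y) (f : Hom x y), el m -> el m' ->
      meq (act (madd m m') f) (madd (act m f) (act m' f))) /\
  (forall x y (m : car M y) (f g : Hom x y), el m ->
      meq (act m (f + g)) (madd (act m f) (act m g))) /\
  (forall x (m : car M x), el m -> meq (act m (idm x)) m) /\
  (forall x y z (m : car M z) (g : Hom y z) (f : Hom x y), el m ->
      meq (act m (comp g f)) (act (act m g) f)).

Definition submod (M : rmod) := forall x, car M x -> Prop.

Definition is_submod (M : rmod) (N : submod M) : Prop :=
  (forall x (a : car M x), N x a -> el a) /\
  (forall x (a b : car M x), el a -> el b -> meq a b -> N x a -> N x b) /\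
  (forall x, N x (mzero M x)) /\
  (forall x (a b : car M x), N x a -> N x b -> N x (madd a b)) /\
  (forall x (a : car M x), N x a -> N x (mopp a)) /\
  (forall x y (m : car M y) (f : Hom x y), N y m -> N x (act m f)).

Definition is_morph (M N : rmod) (phi : forall x, car M x -> car N x) : Prop :=
  (forall x (a : car M x), el a -> el (phi x a)) /\
  (forall x (a b : car M x), el a -> el b -> meq a b -> meq (phi x a) (phi x b)) /\
  (forall x (a b : car M x), el a -> el b ->
      meq (phi x (madd a b)) (madd (phi x a) (phi x b))) /\
  (forall x y (m : car M y) (f : Hom x y), el m ->
      meq (phi x (act m f)) (act (phi y m) f)).

Definition iso_mod (M N : rmod) : Prop :=
  exists (phi : forall x, car M x -> car N x) (psi : forall x, car N x -> car M x),
    is_morph phi /\ is_morph psi /\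
    (forall x (a : car M x), el a -> meq (psi x (phi x a)) a) /\
    (forall x (b : car N x), el b -> meq (phi x (psi x b)) b).

Definition im_sub (M N : rmod) (phi : forall x, car M x -> car N x) (S : submod N) : Prop :=
  forall x (a : car M x), el a -> S x (phi x a).

Definition subquot (M : rmod) (S N : submod M) : rmod :=
  {| car := car M; el := S; meq := fun x a b => N x (madd a (mopp b));
     mzero := mzero M; madd := @madd M; mopp := @mopp M; act := @act M |}.

Definition fullsub (M : rmod) : submod M := fun x a => el a.

Definition zerosub (M : rmod) : submod M := fun x a => el a /\ meq a (mzero M x).

Definition trace (X M : rmod) : submod M := fun x m =>
  el m /\
  exists l : list ((forall y, car X y -> car M y) * car X x),
    Forall (fun p => is_morph p.1 /\ el p.2) l /\
    meq m (fold_right (fun p acc => madd (p.1 x p.2) acc) (mzero M x) l).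

Definition dsum (J : Type) (D : J -> rmod) : rmod :=
  {| car := fun x => forall j, car (D j) x;
     el := fun x c => (forall j, el (c j)) /\
                      exists l : list J, forall j, ~ In j l -> meq (c j) (mzero (D j) x);
     meq := fun x c d => forall j, meq (c j) (d j);
     mzero := fun x j => mzero (D j) x;
     madd := fun x c d j => madd (c j) (d j);
     mopp := fun x c j => mopp (c j);
     act := fun x y c f j => act (c j) f |}.

Definition Yo (e : Obj) : rmod :=
  {| car := fun x => Hom x e;
     el := fun x _ => True;
     meq := fun x a b => a = b;
     mzero := fun x => 0;
     madd := fun x a b => a + b;
     mopp := fun x a => - a;
     act := fun x y h f => comp h f |}.

(* Admissible families, indexed by a well-ordered type (I, lt)         *)
(* (i.e. by an ordinal alpha).                                         *)
Definition well_order (I : Type) (lt : I -> I -> Prop) : Prop :=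
  well_founded lt /\
  (forall i j k, lt i j -> lt j k -> lt i k) /\
  (forall i j, lt i j \/ i = j \/ lt j i).

Definition section (I : Type) (lt : I -> I -> Prop) (B : I -> Obj -> Prop)
    (i : I) (x : Obj) : Prop :=
  local_obj x /\ B i x /\
  forall j y, lt j i -> B j y -> local_obj y -> ~ iso_obj x y.

Definition exhaustive_admissible (I : Type) (lt : I -> I -> Prop)
    (B : I -> Obj -> Prop) : Prop :=
  (forall i x, B i x <-> addB (B i) x) /\
  (forall i j x, lt i j -> B i x -> B j x) /\
  (forall x, exists i, B i x) /\
  (forall i, exists x, section lt B i x).

Definition rep_system (rep : Obj -> Prop) : Prop :=
  (forall r, rep r -> local_obj r) /\
  (forall x, local_obj x -> exists r, rep r /\ iso_obj r x) /\
  (forall r r', rep r -> rep r' -> iso_obj r r' -> r = r').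

Definition Pbar (I : Type) (lt : I -> I -> Prop) (B : I -> Obj -> Prop)
    (rep : Obj -> Prop) (j : I) : rmod :=
  @dsum {r : Obj | rep r /\ section lt B j r} (fun r => Yo (proj1_sig r)).

Definition Pbar_below (I : Type) (lt : I -> I -> Prop) (B : I -> Obj -> Prop)
    (rep : Obj -> Prop) (i : I) : rmod :=
  @dsum {j : I | lt j i} (fun j => Pbar lt B rep (proj1_sig j)).

Definition Delta (I : Type) (lt : I -> I -> Prop) (B : I -> Obj -> Prop)
    (rep : Obj -> Prop) (e : Obj) (i : I) : rmod :=
  @subquot (Yo e) (@fullsub (Yo e)) (@trace (Pbar_below lt B rep i) (Yo e)).

Definition in_Delta_sum (I : Type) (lt : I -> I -> Prop) (B : I -> Obj -> Prop)
    (rep : Obj -> Prop) (i : I) (N : rmod) : Prop :=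
  exists (n : nat) (es : 'I_n -> Obj),
    (forall t, rep (es t) /\ section lt B i (es t)) /\
    iso_mod N (@dsum 'I_n (fun t => Delta lt B rep (es t) i)).

End Ringoid.

(* Main.v *)
Require Import Defs.
From mathcomp Require Import all_boot all_algebra.
From Stdlib Require Import List ClassicalEpsilon ProofIrrelevance Eqdep.
From mathcomp Require Import zify.
Import GRing.Theory.

Set Implicit Arguments.
Unset Strict Implicit.
Unset Printing Implicit Defensive.

Section CompLemmas.
Local Open Scope ring_scope.
Variables (K : comPzRingType) (R : ringoid K).

Lemma comp_addl (x y z : Obj R) (g g' : Defs.Hom y z) (f : Defs.Hom x y) :
  Defs.comp (g + g') f = Defs.comp g f + Defs.comp g' f.
Proof. by rewrite -{1}[g]scale1r comp_linl scale1r. Qed.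

Lemma comp_addr (x y z : Obj R) (g : Defs.Hom y z) (f f' : Defs.Hom x y) :
  Defs.comp g (f + f') = Defs.comp g f + Defs.comp g f'.
Proof. by rewrite -{1}[f]scale1r comp_linr scale1r. Qed.

Lemma comp_0l (x y z : Obj R) (f : Defs.Hom x y) : Defs.comp (0 : Defs.Hom y z) f = 0.
Proof.
have h := comp_addl (0 : Defs.Hom y z) 0 f; rewrite addr0 in h.
by apply: (@addrI _ (Defs.comp 0 f)); rewrite -h addr0.
Qed.

Lemma comp_0r (x y z : Obj R) (g : Defs.Hom y z) : Defs.comp g (0 : Defs.Hom x y) = 0.
Proof.
have h := comp_addr g (0 : Defs.Hom x y) 0; rewrite addr0 in h.
by apply: (@addrI _ (Defs.comp g 0)); rewrite -h addr0.
Qed.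

Lemma comp_oppl (x y z : Obj R) (g : Defs.Hom y z) (f : Defs.Hom x y) : Defs.comp (- g) f = - Defs.comp g f.
Proof. by apply/eqP; rewrite -subr_eq0 opprK -comp_addl addNr comp_0l. Qed.

End CompLemmas.

Section GS.
Variables (T : Type) (el : T -> Prop) (eqv : T -> T -> Prop) (z : T)
  (add : T -> T -> T) (opp : T -> T).
Hypotheses (elz : el z) (eladd : forall a b, el a -> el b -> el (add a b))
  (elopp : forall a, el a -> el (opp a))
  (rf : forall a, el a -> eqv a a)
  (sy : forall a b, el a -> el b -> eqv a b -> eqv b a)
  (tr : forall a b c, el a -> el b -> el c -> eqv a b -> eqv b c -> eqv a c)
  (cadd : forall a a' b b', el a -> el a' -> el b -> el b' -> eqv a a' -> eqv b b' ->
      eqv (add a b) (add a' b'))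
  (asc : forall a b c, el a -> el b -> el c -> eqv (add a (add b c)) (add (add a b) c))
  (cm : forall a b, el a -> el b -> eqv (add a b) (add b a))
  (z0 : forall a, el a -> eqv (add z a) a)
  (inv : forall a, el a -> eqv (add (opp a) a) z).
Variable N : T -> Prop.
Hypotheses (Nel : forall a, N a -> el a)
  (Nmeq : forall a b, el a -> el b -> eqv a b -> N a -> N b)
  (Nz : N z) (Nadd : forall a b, N a -> N b -> N (add a b))
  (Nopp : forall a, N a -> N (opp a)).

Local Hint Resolve eladd elopp elz rf : core.

Ltac T b := apply (@tr _ b); auto.
Ltac S := apply: sy; auto.

Lemma gs_a0 a : el a -> eqv (add a z) a.
Proof. move=> ha; T (add z a). Qed.

Lemma gs_aN a : el a -> eqv (add a (opp a)) z.
Proof. move=> ha; T (add (opp a) a). Qed.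

Lemma gs_medial a n b m : el a -> el n -> el b -> el m ->
  eqv (add (add a n) (add b m)) (add (add a b) (add n m)).
Proof.
move=> ha hn hb hm.
T (add a (add n (add b m))).
T (add a (add (add n b) m)).
T (add a (add (add b n) m)).
T (add a (add b (add n m))).
Qed.

Definition rel a b := el a /\ el b /\ exists n, N n /\ eqv a (add b n).

Lemma rel_eqv a b : el a -> el b -> eqv a b -> rel a b.
Proof.
move=> ha hb e; split=> //; split=> //; exists z; split=> //.
T b; S; exact: gs_a0.
Qed.

Lemma rel_sym a b : rel a b -> rel b a.
Proof.
move=> [ha [hb [n [hn e]]]]; have hn' := Nel hn.
split=> //; split=> //; exists (opp n); split; first exact: Nopp.
S.
T (add (add b n) (opp n)).
T (add b (add n (opp n))).
T (add b z); last exact: gs_a0.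
apply: cadd; auto; exact: gs_aN.
Qed.

Lemma rel_trans a b c : rel a b -> rel b c -> rel a c.
Proof.
move=> [ha [hb [n [hn e]]]] [_ [hc [m [hm e']]]].
have hn' := Nel hn; have hm' := Nel hm.
split=> //; split=> //; exists (add m n); split; first exact: Nadd.
T (add (add c m) n); try solve [T (add b n)].
all: try solve [S].
Qed.

Lemma rel_add a a' b b' : rel a a' -> rel b b' -> rel (add a b) (add a' b').
Proof.
move=> [ha [ha' [n [hn e]]]] [hb [hb' [m [hm e']]]].
have hn' := Nel hn; have hm' := Nel hm.
split; auto; split; auto; exists (add n m); split; first exact: Nadd.
T (add (add a' n) (add b' m)).
exact: gs_medial.
Qed.

Lemma rel_sq a b : el a -> el b -> N (add a (opp b)) -> rel a b.
Proof.
move=> ha hb h; split=> //; split=> //; exists (add a (opp b)); split=> //.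
S.
T (add b (add (opp b) a)).
T (add (add b (opp b)) a).
T (add z a).
apply: cadd; auto; exact: gs_aN.
Qed.

Lemma rel_N0 a : rel a z -> N a.
Proof.
move=> [ha [_ [n [hn e]]]]; have hn' := Nel hn.
apply: (Nmeq (a := n)); auto.
S; T (add z n).
Qed.

Lemma rel_refl a : el a -> rel a a.
Proof. move=> ha; exact: (rel_eqv ha ha (rf ha)). Qed.

Lemma rel_cancel a b : el a -> el b -> rel (add a b) a -> rel b z.
Proof.
move=> ha hb h.
have h2 := rel_add h (rel_refl (elopp ha)).
apply: (rel_trans (b := add (add a b) (opp a))).
  apply: rel_eqv; auto; S.
  T (add (add b a) (opp a)).
  T (add b (add a (opp a))).
  T (add b z); last exact: gs_a0.
  apply: cadd; auto; exact: gs_aN.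
apply: (rel_trans h2); apply: rel_eqv; auto; exact: gs_aN.
Qed.

End GS.
Set Implicit Arguments.
Unset Strict Implicit.
Unset Printing Implicit Defensive.

Section Tr.
Local Open Scope ring_scope.
Variables (K : comPzRingType) (R : ringoid K) (X : rmod R) (e x : Obj R).
Notation Tr := (@trace K R X (Yo e) x).

Lemma fold_shift (l : list ((forall y, car X y -> car (Yo e) y) * car X x)) (s : Defs.Hom x e) :
  fold_right (fun p acc => p.1 x p.2 + acc) s l =
  fold_right (fun p acc => p.1 x p.2 + acc) 0 l + s.
Proof. elim: l => [|p l IH] /=; first by rewrite add0r. by rewrite IH addrA. Qed.

Lemma Tr0 : Tr 0.
Proof. split=> //; exists nil; split=> //. Qed.

Lemma TrD a b : Tr a -> Tr b -> Tr (a + b).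
Proof.
move=> [_ [la [Fa Ea]]] [_ [lb [Fb Eb]]]; split=> //; exists (la ++ lb); split.
  by apply Forall_app.
rewrite /= in Ea Eb *; rewrite fold_right_app fold_shift -Eb -Ea //.
Qed.

Lemma TrN a : Tr a -> Tr (- a).
Proof.
move=> [_ [l [F E]]]; split=> //.
exists (List.map (fun p => ((fun y (d : car X y) => - (p.1 y d : Defs.Hom y e)), p.2)) l).
split.
  apply Forall_map; apply: Forall_impl F => -[g d] /= [[H1 [H2 [H3 H4]]] Hd]; split=> //.
  split=> //; split; last split.
  - by move=> y a0 b0 ha hb hab /=; rewrite (H2 _ _ _ ha hb hab).
  - by move=> y a0 b0 ha hb /=; rewrite (H3 _ _ _ ha hb) /= opprD.
  - by move=> y z m f hm /=; rewrite (H4 _ _ _ _ hm) /= comp_oppl.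
rewrite /= in E *; rewrite E; elim: l {F E} => [|p l IH] /=; first by rewrite oppr0.
by rewrite opprD IH.
Qed.

End Tr.
Set Implicit Arguments.
Unset Strict Implicit.
Unset Printing Implicit Defensive.

Lemma sig_eq_val (A : Type) (P : A -> Prop) (a b : {x : A | P x}) :
  proj1_sig a = proj1_sig b -> a = b.
Proof.
case: a b => [a pa] [b pb] /= eab; subst b; f_equal; apply proof_irrelevance.
Qed.

Section Constr.
Local Open Scope ring_scope.
Variables (K : comPzRingType) (R : ringoid K).

Lemma supp_lemma (y : Obj R) (P : Obj R -> Prop) (o : Obj R)
  (F : forall r0 : {o | P o}, Defs.Hom y (proj1_sig r0)) :
  (forall r0, proj1_sig r0 <> o -> F r0 = 0) ->
  exists l, forall r0, ~ List.In r0 l -> F r0 = 0.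
Proof.
move=> HF.
case: (classic (exists r1 : {o | P o}, proj1_sig r1 = o)) => [[r1 h1]|nh].
  exists (r1 :: nil) => r0 nin; apply: HF => h0; apply: nin; left.
  by apply: sig_eq_val; rewrite h0 h1.
exists nil => r0 _; apply: HF => h0; apply: nh; by exists r0.
Qed.

Variables (r : Obj R).

Definition Ev (o : Obj R) : Defs.Hom r o :=
  match excluded_middle_informative (r = o) with
  | left eq => eq_rect r (fun o => Defs.Hom r o) (idm r) o eq
  | right _ => 0
  end.

Lemma Ev_id : Ev r = idm r.
Proof.
rewrite /Ev; case: (excluded_middle_informative (r = r)) => [eq|n]; last by [].
by rewrite -eq_rect_eq.
Qed.

Lemma Ev_ne o : r <> o -> Ev o = 0.
Proof. by rewrite /Ev; case: (excluded_middle_informative (r = o)). Qed.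

Variables (I : Type) (lt : I -> I -> Prop) (B : I -> Obj R -> Prop) (rep : Obj R -> Prop)
  (i j : I) (Hji : lt j i) (Hr : rep r /\ section lt B j r)
  (e x : Obj R) (w : Defs.Hom r e) (u : Defs.Hom x r).

Definition jj : {j0 | lt j0 i} := exist _ j Hji.
Definition rr : {r0 | rep r0 /\ section lt B j r0} := exist _ r Hr.

Definition dd : car (Pbar_below lt B rep i) x :=
  fun (j0 : {j0 | lt j0 i}) (r0 : {r0 | rep r0 /\ section lt B (proj1_sig j0) r0}) =>
    if excluded_middle_informative (proj1_sig j0 = j)
    then Defs.comp (Ev (proj1_sig r0)) u else (0 : Defs.Hom x (proj1_sig r0)).

Definition gg (y : Obj R) (d : car (Pbar_below lt B rep i) y) : car (Yo e) y :=
  Defs.comp w (d jj rr).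

Lemma gg_morph : is_morph gg.
Proof.
split; first by [].
split; first by move=> y a b _ _ hab; rewrite /gg /= (hab jj rr).
split; first by move=> y a b _ _; rewrite /gg /= comp_addr.
by move=> y z m f _; rewrite /gg /= comp_assoc.
Qed.

Lemma dd_el : el dd.
Proof.
split.
  move=> j0; split; first by [].
  apply: (supp_lemma (o := r)) => r0 hne /=; rewrite /dd.
  case: excluded_middle_informative => [h|h] //.
  rewrite /=. rewrite Ev_ne; last by move=> h0; apply: hne. by rewrite comp_0l.
exists (jj :: nil) => j0 nin r0 /=; rewrite /dd.
case: excluded_middle_informative => // h.
exfalso; apply: nin; left; by apply: sig_eq_val.
Qed.

Lemma gg_dd : gg dd = Defs.comp w u.
Proof.
rewrite /gg /dd /=; case: excluded_middle_informative => [h|h] //.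
by rewrite /= Ev_id comp_idl.
Qed.

Lemma Tr_constr : @trace K R (Pbar_below lt B rep i) (Yo e) x (Defs.comp w u).
Proof.
split; first by [].
exists ((gg, dd) :: nil); split.
  by constructor; [split; [exact: gg_morph|exact: dd_el]| constructor].
by rewrite /= gg_dd addr0.
Qed.

End Constr.
Unset Implicit Arguments.
Unset Strict Implicit.
Unset Printing Implicit Defensive.

Lemma tele (V : zmodType) (a b c : V) : ((a - b) + (b - c) = a - c)%R.
Proof. by rewrite addrA subrK. Qed.

Section Step.
Local Open Scope ring_scope.
Variables (K : comPzRingType) (R : ringoid K) (I : Type) (lt : I -> I -> Prop)
  (B : I -> Obj R -> Prop) (rep : Obj R -> Prop) (M : rmod R) (HM : is_rmod M)
  (N1 N0 : submod M) (HN1 : is_submod N1) (HN0 : is_submod N0)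
  (i : I) (Hq : in_Delta_sum lt B rep i (subquot N1 N0))
  (j : I) (Hji : lt j i)
  (f : forall x, car (Pbar lt B rep j) x -> car M x) (Hf : is_morph f)
  (Him : im_sub f N1).

Lemma step : im_sub f N0.
Proof.
move=> x c Hc.
case: HM => elz [eladd [elopp [elact [rf [sy [tr [cadd [copp [cact [asc [cm [z0 [inv
  [actadd [actaddh [actid actcomp]]]]]]]]]]]]]]]].
case: HN1 => N1el [N1meq [N1z [N1add [N1opp N1act]]]].
case: HN0 => N0el [N0meq [N0z [N0add [N0opp N0act]]]].
case: Hf => Hfel [Hfmeq [Hfadd Hfact]].
case: Hq => n [es [Hes [phi [psi [[Hphiel [Hphimeq [Hphiadd Hphiact]]]
  [[Hpsiel [Hpsimeq [Hpsiadd Hpsiact]]] [Hpp Hpp']]]]]]].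
have L1 : forall y (a b : car M y), el a -> el b -> meq a b -> N0 y (madd a (mopp b)).
  move=> y a b ha hb hab.
  have hab' : el (madd a (mopp b)) by auto.
  apply: (N0meq y (mzero M y) _ (elz y) hab' _ (N0z y)).
  apply: sy; auto.
  apply: (tr _ _ (madd b (mopp b))); auto.
  apply: (tr _ _ (madd (mopp b) b)); auto.
have HL1 : forall y (a b : car M y), N1 y a -> N1 y b -> meq a b -> forall t,
    @trace K R (Pbar_below lt B rep i) (Yo (es t)) y (phi y a t - phi y b t).
  move=> y a b ha hb hab t.
  exact: (Hphimeq y a b ha hb (L1 y a b (N1el _ _ ha) (N1el _ _ hb) hab) t).
have elP : forall y (c0 : car (Pbar lt B rep j) y) (L : list {r0 | rep r0 /\ section lt B j r0}),
    (forall r0, ~ List.In r0 L -> c0 r0 = 0) -> el c0.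
  by move=> y c0 L Hs; split=> //; exists L.
have Claim : forall t (L : list {r0 | rep r0 /\ section lt B j r0})
    (c0 : car (Pbar lt B rep j) x),
    (forall r0, ~ List.In r0 L -> c0 r0 = 0) ->
    @trace K R (Pbar_below lt B rep i) (Yo (es t)) x (phi x (f x c0) t).
  move=> t L; elim: L => [|r1 L IH] c0 Hs.
  - have e1 : meq c0 (madd c0 c0) by move=> r0 /=; rewrite Hs ?addr0.
    have elc : el c0 := elP _ _ _ Hs.
    have elcc : el (madd c0 c0).
      by apply: (elP _ _ nil) => r0 _ /=; rewrite Hs ?addr0.
    have m1 := Hfmeq x c0 (madd c0 c0) elc elcc e1.
    have m2 := Hfadd x c0 c0 elc elc.
    have T1 := HL1 x _ _ (Him x c0 elc) (Him x _ elcc) m1 t.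
    have T2 := HL1 x _ _ (Him x _ elcc) (N1add x _ _ (Him x c0 elc) (Him x c0 elc)) m2 t.
    have T3 := Hphiadd x _ _ (Him x c0 elc) (Him x c0 elc) t.
    have := TrN (TrD T1 (TrD T2 T3)).
    by rewrite /= !tele opprB addrK.
  - pose E : car (Pbar lt B rep j) (proj1_sig r1) :=
      fun r0 => Ev (proj1_sig r1) (proj1_sig r0).
    pose c' : car (Pbar lt B rep j) x :=
      fun r0 => if excluded_middle_informative (r0 = r1) then 0 else c0 r0.
    have Ev0 : forall r0 : {r0 | rep r0 /\ section lt B j r0}, r0 <> r1 ->
        Ev (proj1_sig r1) (proj1_sig r0) = 0.
      move=> r0 h; apply: Ev_ne => h'; apply: h; apply: sig_eq_val; by rewrite h'.
    have elc : el c0 := elP _ _ _ Hs.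
    have elE : el E.
      apply: (elP _ _ (r1 :: nil)) => r0 h; apply: Ev0 => h'; apply: h; left; by rewrite h'.
    have Hc' : forall r0, ~ List.In r0 L -> c' r0 = 0.
      move=> r0 h; rewrite /c'; case: excluded_middle_informative => h' //.
      apply: Hs => -[h2|h2]; [by apply: h'; rewrite h2|by apply: h].
    have elc' := elP _ _ _ Hc'.
    have elA : el (Defs.act E (c0 r1)).
      apply: (elP _ _ (r1 :: nil)) => r0 h /=; rewrite /E Ev0 ?comp_0l // => h'; apply: h; left; by rewrite h'.
    have elAc : el (madd (Defs.act E (c0 r1)) c').
      apply: (elP _ _ (r1 :: L)) => r0 h /=.
      case: (excluded_middle_informative (r0 = r1)) => h'.
        by exfalso; apply: h; left; rewrite h'.
      rewrite /E Ev0 // comp_0l add0r /c'; case: excluded_middle_informative => [h2|h2] /=; first by [].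
      by apply: Hs.
    have Hdec : meq c0 (madd (Defs.act E (c0 r1)) c').
      move=> r0 /=; rewrite /c' /E; case: excluded_middle_informative => h'.
        by subst r0; rewrite Ev_id comp_idl addr0.
      by rewrite Ev0 // comp_0l add0r.
    have m1 := Hfmeq x c0 _ elc elAc Hdec.
    have m2 := Hfadd x _ _ elA elc'.
    have m3 := Hfact x (proj1_sig r1) E (c0 r1) elE.
    have HA := Him x _ elA; have Hc'1 := Him x _ elc'; have HE := Him _ _ elE.
    have T1 := HL1 x _ _ (Him x c0 elc) (Him x _ elAc) m1 t.
    have T2a := HL1 x _ _ (Him x _ elAc) (N1add x _ _ HA Hc'1) m2 t.
    have T2b := Hphiadd x _ _ HA Hc'1 t.
    have T3 := HL1 x _ _ HA (N1act _ _ _ _ HE) m3 t.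
    have T4 := Hphiact x (proj1_sig r1) _ (c0 r1) HE t.
    have T5 := Tr_constr Hji (proj2_sig r1) (phi _ (f _ E) t) (c0 r1).
    have T6 := IH c' Hc'.
    have := TrD (TrD T1 (TrD T2a T2b)) (TrD (TrD (TrD T3 T4) T5) T6).
    by rewrite /= !tele !subrK.
have elQ := Hphiel x _ (Him x c Hc).
pose Z := mzero (dsum (fun t => Delta lt B rep (es t) i)) x.
have elZ : el Z.
  split=> //; exists nil => t _ /=; rewrite subr0; exact: Tr0.
have mQZ : meq (phi x (f x c)) Z.
  move=> t /=; rewrite subr0.
  have [_ [L HL]] := Hc.
  exact: (Claim t L c HL).
have elZZ : el (madd Z Z).
  split=> //; exists nil => t _ /=; rewrite !addr0 subr0; exact: Tr0.
have mZZ : meq (madd Z Z) Z.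
  move=> t /=; rewrite !addr0 subr0; exact: Tr0.
have p1 := Hpsimeq x _ _ elQ elZ mQZ.
have p2 := Hpp x _ (Him x c Hc).
have p3 := Hpsimeq x _ _ elZZ elZ mZZ.
have p4 := Hpsiadd x _ _ elZ elZ.
have eZ := N1el _ _ (Hpsiel x _ elZ).
have eZZ := N1el _ _ (Hpsiel x _ elZZ).
have eQ := N1el _ _ (Hpsiel x _ elQ).
have efc := N1el _ _ (Him x c Hc).
have RS := rel_sq (elz x) (eladd x) (elopp x) (rf x) (sy x) (tr x) (cadd x) (asc x) (cm x)
  (z0 x) (inv x) (N0el x).
have RT := rel_trans (eladd x) (rf x) (sy x) (tr x) (cadd x) (asc x) (N0el x) (N0add x).
have RY := rel_sym (elz x) (eladd x) (elopp x) (rf x) (sy x) (tr x) (cadd x) (asc x) (cm x)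
  (z0 x) (inv x) (N0el x) (N0add x) (N0opp x).
have RC := rel_cancel (elz x) (eladd x) (elopp x) (rf x) (sy x) (tr x) (cadd x) (asc x) (cm x)
  (z0 x) (inv x) (N0el x) (N0z x) (N0add x).
have r1 := RS _ _ eQ eZ p1.
have r2 := RS _ _ eQ efc p2.
have r3 := RS _ _ eZZ eZ p3.
have r4 := RS _ _ eZZ (eladd x _ _ eZ eZ) p4.
have r6 := RC _ _ eZ eZ (RT _ _ _ (RY _ _ r4) r3).
apply: (rel_N0 (sy x) (tr x) (z0 x) (N0el x) (N0meq x) (N0z x) (N0add x)).
exact: (RT _ _ _ (RY _ _ r2) (RT _ _ _ r1 r6)).
Qed.
End Step.

Unset Implicit Arguments.

Theorem proposition4p6
  (K : comPzRingType) (R : ringoid K)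
  (HR : locally_finite R)
  (I : Type) (lt : I -> I -> Prop) (Hwo : well_order lt)
  (B : I -> Obj R -> Prop) (HB : exhaustive_admissible lt B)
  (rep : Obj R -> Prop) (Hrep : rep_system rep)
  (M : rmod R) (HM : is_rmod M)
  (HM0 : ~ (forall x (m : car M x), el m -> meq m (mzero M x)))
  (a : nat) (Mf : nat -> submod M) (idx : nat -> I)
  (Hsub : forall k, (k <= a)%N -> is_submod (Mf k))
  (H0 : forall x (m : car M x), Mf 0%N x m <-> zerosub m)
  (Ha : forall x (m : car M x), Mf a x m <-> el m)
  (Hstrict : forall k, (1 <= k <= a)%N ->
      (forall x (m : car M x), Mf k.-1 x m -> Mf k x m) /\
      ~ (forall x (m : car M x), Mf k x m -> Mf k.-1 x m))
  (Hquot : forall k, (1 <= k <= a)%N ->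
      in_Delta_sum lt B rep (idx k) (subquot (Mf k) (Mf k.-1)))
  (Hinc : forall k l, (1 <= k)%N -> (k < l)%N -> (l <= a)%N -> lt (idx k) (idx l)) :
  forall k, (1 <= k <= a)%N ->
  forall j : I, (lt j (idx k) \/ j = idx k) ->
  forall f : forall x, car (Pbar lt B rep j) x -> car M x,
    is_morph f ->
    (j = idx k -> im_sub f (Mf k)) /\
    (lt j (idx k) -> im_sub f (Mf k.-1)).
Proof.
move=> k Hk j Hj f Hf.
case: Hwo => _ [Htrans _].
have Hkey : forall l, (1 <= l <= a)%N -> lt j (idx l) -> im_sub f (Mf l) -> im_sub f (Mf l.-1).
  move=> l Hl Hjl Him.
  have Hl1 : (l <= a)%N by case/andP: Hl.
  have Hl2 : (l.-1 <= a)%N by apply: leq_trans (leq_pred l) Hl1.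
  exact: (step K R I lt B rep M HM (Mf l) (Mf l.-1) (Hsub l Hl1) (Hsub l.-1 Hl2)
    (idx l) (Hquot l Hl) j Hjl f Hf Him).
case/andP: Hk => Hk1 Hka.
have Hdown : forall d, (k <= a - d)%N -> im_sub f (Mf (a - d)%N).
  elim=> [|d IH] Hd.
    rewrite subn0 => x m hm; apply/Ha; case: Hf => Hfel _; exact: Hfel.
  have Hlt : (k < a - d)%N by lia.
  have Hla : (1 <= a - d <= a)%N by apply/andP; split; lia.
  have Hjl : lt j (idx (a - d)%N).
    have Hi := Hinc k (a - d)%N Hk1 Hlt (leq_subr d a).
    case: Hj => [Hj|->]; last exact: Hi.
    exact: Htrans _ _ _ Hj Hi.
  have := Hkey (a - d)%N Hla Hjl (IH (ltnW Hlt)).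
  by rewrite subnS.
have HMk : im_sub f (Mf k).
  have := Hdown (a - k)%N; rewrite subKn //; apply; exact: leqnn.
split=> [_|Hlt]; first exact: HMk.
by apply: Hkey => //; apply/andP.
Qed.
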